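(* Let $f:\mathbb{R}^{2}\to\mathbb{R}$ be smooth and normal, and for $k_{1}\neq0$, $k_{2}\neq0$, $x,y\in\mathbb{R}$ let $F(k_{1},y)=\lim_{r\to\infty}\int_{-r}^{r}f(x,y)e^{-ik_{1}x}\,dx$ and $G(x,k_{2})=\lim_{r\to\infty}\int_{-r}^{r}f(x,y)e^{-ik_{2}y}\,dy$. Then for $k_{1}\neq0$, $k_{2}\neq0$ the integrals $F(k_{1},k_{2})=\int_{-\infty}^{\infty}F(k_{1},y)e^{-ik_{2}y}\,dy$ and $G(k_{1},k_{2})=\int_{-\infty}^{\infty}G(x,k_{2})e^{-ik_{1}x}\,dx$ are well defined, and $F(k_{1},k_{2})=G(k_{1},k_{2})=\lim_{m\to\infty,n\to\infty}\int_{-m}^{m}\int_{-n}^{n}f(x,y)e^{-ik_{1}x}e^{-ik_{2}y}\,dx\,dy.$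
   Context: One-variable notions: a smooth $g:\mathbb{R}\setminus V\to\mathbb{R}$, $V\subset\mathbb{R}$ bounded closed, is analytic at infinity if there exist $\epsilon_{1},\epsilon_{2}>0$ such that $g(1/t)=\sum_{n\geq1}a_{n}t^{n}$ for $0<t<\epsilon_{1}$ and $g(1/t)=\sum_{n\geq1}b_{n}t^{n}$ for $-\epsilon_{2}<t<0$, with real coefficients and both power series absolutely convergent on the respective intervals. Two-variable notions: for smooth $f:\mathbb{R}^{2}\to\mathbb{R}$, $f$ is of very moderate decrease if there is $C>0$ with $|f(x,y)|\leq\frac{C}{|(x,y)|}$ for $|(x,y)|>1$, and of moderate decrease if $|f(x,y)|\leq\frac{C}{|(x,y)|^{2}}$ for $|(x,y)|>1$. For fixed $x$ write $f_{x}(y)=f(x,y)$ and for fixed $y$ write $f_{y}(x)=f(x,y)$. $f$ is normal if: (i) for every $x$, $f_{x}$ is analytic at infinity; (ii) for every $y$, $f_{y}$ is analytic at infinity; (iii) $f$ is of very moderate decrease; (iv) $\frac{\partial f}{\partial x}$ and $\frac{\partial f}{\partial y}$ are of moderate decrease; (v) there is a uniform bound on the number of zeros of $f_{x},(f_{x})',(f_{x})''$ and of $f_{y},(f_{y})',(f_{y})''$. *)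

(* Defs.v *)
From Stdlib Require Import Reals List.
From Coquelicot Require Import Coquelicot.
Import ListNotations.
Open Scope R_scope.

Definition cexpi (t : R) : C := (cos t, sin t).

(** Complex-valued Riemann integrals, componentwise (Coquelicot's [C] is not a
    normed R-module, so we integrate real and imaginary parts separately). *)
Definition RInt_C (g : R -> C) (a b : R) : C :=
  (RInt (fun t => Re (g t)) a b, RInt (fun t => Im (g t)) a b).

Definition is_RInt_gen_C (g : R -> C) (l : C) : Prop :=
  is_RInt_gen (fun t => Re (g t)) (Rbar_locally m_infty) (Rbar_locally p_infty) (Re l) /\
  is_RInt_gen (fun t => Im (g t)) (Rbar_locally m_infty) (Rbar_locally p_infty) (Im l).

Definition dx (f : R -> R -> R) : R -> R -> R := fun x y => Derive (fun t => f t y) x.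
Definition dy (f : R -> R -> R) : R -> R -> R := fun x y => Derive (fun t => f x t) y.

Fixpoint Ck (n : nat) (f : R -> R -> R) : Prop :=
  match n with
  | O => forall p : R * R, continuous (fun q : R * R => f (fst q) (snd q)) p
  | S m => (forall x y, ex_derive (fun t => f t y) x /\ ex_derive (fun t => f x t) y)
           /\ Ck m f /\ Ck m (dx f) /\ Ck m (dy f)
  end.

Definition smooth2 (f : R -> R -> R) : Prop := forall n, Ck n f.

Definition analytic_at_infinity (g : R -> R) : Prop :=
  exists e1 e2 : R, 0 < e1 /\ 0 < e2 /\
  exists a b : nat -> R,
    (forall t, 0 < t < e1 ->
       ex_series (fun n => Rabs (a n * t ^ (S n))) /\
       is_series (fun n => a n * t ^ (S n)) (g (/ t))) /\
    (forall t, - e2 < t < 0 ->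
       ex_series (fun n => Rabs (b n * t ^ (S n))) /\
       is_series (fun n => b n * t ^ (S n)) (g (/ t))).

Definition norm2 (x y : R) : R := sqrt (x ^ 2 + y ^ 2).

Definition very_moderate_decrease (f : R -> R -> R) : Prop :=
  exists C : R, 0 < C /\ forall x y, 1 < norm2 x y -> Rabs (f x y) <= C / norm2 x y.

Definition moderate_decrease (f : R -> R -> R) : Prop :=
  exists C : R, 0 < C /\ forall x y, 1 < norm2 x y -> Rabs (f x y) <= C / (norm2 x y) ^ 2.

Definition at_most_zeros (g : R -> R) (N : nat) : Prop :=
  forall l : list R, NoDup l -> (forall z, In z l -> g z = 0) -> (length l <= N)%nat.

Definition normal (f : R -> R -> R) : Prop :=
  (forall x, analytic_at_infinity (fun y => f x y)) /\
  (forall y, analytic_at_infinity (fun x => f x y)) /\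
  very_moderate_decrease f /\
  moderate_decrease (dx f) /\ moderate_decrease (dy f) /\
  (exists N : nat,
     (forall x, at_most_zeros (fun y => f x y) N /\
                at_most_zeros (Derive (fun y => f x y)) N /\
                at_most_zeros (Derive (Derive (fun y => f x y))) N) /\
     (forall y, at_most_zeros (fun x => f x y) N /\
                at_most_zeros (Derive (fun x => f x y)) N /\
                at_most_zeros (Derive (Derive (fun x => f x y))) N)).

(* Main.v *)
Require Import Defs.
From Stdlib Require Import Reals Lra Lia Psatz List Classical.
From Coquelicot Require Import Coquelicot.
Open Scope R_scope.

Lemma ballR (x e y : R) : ball x e y <-> Rabs (y - x) < e.
Proof. tauto. Qed.

Lemma cont_mult (f g : R -> R) x : continuous f x -> continuous g x -> continuous (fun y => f y * g y) x.
Proof. intros; apply (continuous_mult (K:=R_AbsRing)); auto. Qed.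
Lemma cont_plus (f g : R -> R) x : continuous f x -> continuous g x -> continuous (fun y => f y + g y) x.
Proof. intros; apply (continuous_plus (V:=R_NormedModule)); auto. Qed.
Lemma cont_minus (f g : R -> R) x : continuous f x -> continuous g x -> continuous (fun y => f y - g y) x.
Proof. intros; apply (continuous_minus (V:=R_NormedModule)); auto. Qed.
Lemma cont_opp (f : R -> R) x : continuous f x -> continuous (fun y => - f y) x.
Proof. intros; apply (continuous_opp (V:=R_NormedModule)); auto. Qed.
Lemma cont_abs (f : R -> R) x : continuous f x -> continuous (fun y => Rabs (f y)) x.
Proof. intros; apply (continuous_comp f Rabs). auto. apply (continuous_abs (K:=R_AbsRing)). Qed.
Lemma cont_const (c x : R) : continuous (fun _ => c) x.
Proof. apply continuous_const. Qed.
Lemma cont_id (x : R) : continuous (fun y => y) x.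
Proof. apply continuous_id. Qed.

Lemma lim_bound {T} (F : (T -> Prop) -> Prop) {FF : ProperFilter F} (u : T -> R) l c e :
  filterlim u F (locally l) -> F (fun r => Rabs (u r - c) <= e) -> Rabs (l - c) <= e.
Proof.
  intros Hl He. destruct (Rle_dec (Rabs (l - c)) e) as [H|H]; auto.
  exfalso. assert (Hp : 0 < Rabs (l - c) - e) by lra.
  apply filterlim_locally with (eps := mkposreal _ Hp) in Hl.
  destruct (filter_ex _ (filter_and _ _ Hl He)) as [r [H1 H2]].
  pose proof (Rabs_triang (l - u r) (u r - c)).
  replace (l - u r + (u r - c)) with (l - c) in H0 by ring.
  assert (H1' : Rabs (u r - l) < Rabs (l - c) - e) by exact H1.
  pose proof (Rabs_minus_sym l (u r)). lra.
Qed.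

Lemma RInt_point0 (f : R -> R) a : RInt f a a = 0.
Proof. rewrite RInt_point. reflexivity. Qed.

Lemma RInt_opp_R (f : R -> R) a b : ex_RInt f a b -> RInt (fun x => - f x) a b = - RInt f a b.
Proof. intro H. apply is_RInt_unique. apply (is_RInt_opp (V:=R_NormedModule)). apply (RInt_correct (V:=R_CompleteNormedModule)). auto. Qed.
Lemma RInt_plus_R (f g : R -> R) a b : ex_RInt f a b -> ex_RInt g a b -> RInt (fun x => f x + g x) a b = RInt f a b + RInt g a b.
Proof. intros H H'. apply is_RInt_unique. apply (is_RInt_plus (V:=R_NormedModule)); apply (RInt_correct (V:=R_CompleteNormedModule)); auto. Qed.
Lemma RInt_minus_R (f g : R -> R) a b : ex_RInt f a b -> ex_RInt g a b -> RInt (fun x => f x - g x) a b = RInt f a b - RInt g a b.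
Proof. intros H H'. apply is_RInt_unique. apply (is_RInt_minus (V:=R_NormedModule)); apply (RInt_correct (V:=R_CompleteNormedModule)); auto. Qed.
Lemma RInt_scal_R (f : R -> R) k a b : ex_RInt f a b -> RInt (fun x => k * f x) a b = k * RInt f a b.
Proof. intros H. apply is_RInt_unique. apply (is_RInt_scal (V:=R_NormedModule)); apply (RInt_correct (V:=R_CompleteNormedModule)); auto. Qed.
Lemma RInt_Chasles_R (f : R -> R) a b c : ex_RInt f a b -> ex_RInt f b c -> RInt f a b + RInt f b c = RInt f a c.
Proof. intros. apply (RInt_Chasles (V:=R_CompleteNormedModule)); auto. Qed.
Lemma ex_RInt_cont (f : R -> R) a b : (forall x, continuous f x) -> ex_RInt f a b.
Proof. intros. apply (ex_RInt_continuous (V:=R_CompleteNormedModule)); auto. Qed.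

Lemma exd_cont (f : R -> R) x : ex_derive f x -> continuous f x.
Proof. intros. apply (ex_derive_continuous (K:=R_AbsRing) (V:=R_NormedModule)); auto. Qed.

Lemma RInt_ext_R (f g : R -> R) a b : (forall x, Rmin a b < x < Rmax a b -> f x = g x) -> RInt f a b = RInt g a b.
Proof. apply RInt_ext. Qed.

Section Osc.
Variable g : R -> R.
Hypothesis Hd : forall x, ex_derive g x.
Hypothesis Hc : forall x, continuous (Derive g) x.

Lemma Dg_continuity : continuity (Derive g).
Proof. intro x. apply continuity_pt_filterlim. apply Hc. Qed.

Lemma RInt_Dg a b : RInt (Derive g) a b = g b - g a.
Proof. apply RInt_Derive; intros; auto. Qed.

Lemma nozero_bound a b M : a <= b -> (forall x, a <= x <= b -> Rabs (g x) <= M) ->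
  (forall c, a < c < b -> Derive g c <> 0) ->
  RInt (fun x => Rabs (Derive g x)) a b <= 2 * M.
Proof.
  intros Hab HM Hz.
  assert (HM0 : 0 <= M) by (pose proof (HM a ltac:(lra)); pose proof (Rabs_pos (g a)); lra).
  destruct (Req_dec a b) as [<-|Hab'].
  { rewrite RInt_point0. lra. }
  assert (Hab2 : a < b) by lra.
  pose proof (HM a ltac:(lra)) as Ha. pose proof (HM b ltac:(lra)) as Hb.
  apply Rabs_le_between in Ha. apply Rabs_le_between in Hb.
  destruct (classic (exists p, a < p < b /\ Derive g p < 0)) as [[p [Hp Hpn]]|Hn].
  - assert (Hall : forall x, a < x < b -> Derive g x < 0).
    { intros x Hx. destruct (Rlt_dec (Derive g x) 0) as [H|H]; auto. exfalso.
      assert (Hpos : 0 < Derive g x) by (pose proof (Hz x Hx); lra).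
      destruct (Rlt_dec p x) as [Hpx|Hpx].
      - destruct (IVT (Derive g) p x Dg_continuity Hpx Hpn Hpos) as [z [Hz1 Hz2]].
        apply (Hz z); auto; lra.
      - assert (Hxp : x < p) by (destruct (Req_dec x p); subst; lra).
        assert (Hcn : continuity (fun t => - Derive g t)).
        { apply continuity_opp. apply Dg_continuity. }
        destruct (IVT (fun t => - Derive g t) x p Hcn Hxp ltac:(lra) ltac:(lra)) as [z [Hz1 Hz2]].
        apply (Hz z); [lra|lra]. }
    rewrite (RInt_ext _ (fun x => - (Derive g x))).
    2:{ intros x Hx. rewrite Rmin_left in Hx by lra. rewrite Rmax_right in Hx by lra.
        rewrite Rabs_left; auto. }
    rewrite RInt_opp_R. rewrite RInt_Dg. lra.
    apply ex_RInt_cont; intros; auto.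
  - rewrite (RInt_ext _ (Derive g)).
    2:{ intros x Hx. rewrite Rmin_left in Hx by lra. rewrite Rmax_right in Hx by lra.
        rewrite Rabs_right; auto. destruct (Rlt_dec (Derive g x) 0); [|lra].
        exfalso; apply Hn; exists x; auto. }
    rewrite RInt_Dg. lra.
Qed.
End Osc.

Lemma tv_bound (g : R -> R) (Hd : forall x, ex_derive g x) (Hc : forall x, continuous (Derive g) x) M :
  forall n a b, a <= b -> (forall x, a <= x <= b -> Rabs (g x) <= M) ->
  (forall l, NoDup l -> (forall z, In z l -> a < z < b /\ Derive g z = 0) -> (length l <= n)%nat) ->
  RInt (fun x => Rabs (Derive g x)) a b <= 2 ^ (S n) * M.
Proof.
  induction n as [|n IH]; intros a b Hab HM Hz;
  (assert (HM0 : 0 <= M) by (pose proof (HM a ltac:(lra)); pose proof (Rabs_pos (g a)); lra));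
  (destruct (classic (exists c, a < c < b /\ Derive g c = 0)) as [[c [Hc1 Hc2]]|Hn]).
  - exfalso. assert (H := Hz (c :: nil)). simpl in H.
    assert (H1 : (1 <= 0)%nat). { apply H. constructor. intro Hf; inversion Hf. constructor.
      intros z [<-|[]]; auto. } lia.
  - eapply Rle_trans. apply (nozero_bound g Hd Hc a b M Hab HM).
    intros c Hc' Hc0; apply Hn; exists c; auto. simpl; lra.
  - assert (Hint : forall u v, ex_RInt (fun x => Rabs (Derive g x)) u v).
    { intros; apply ex_RInt_cont; intros; apply cont_abs; auto. }
    rewrite <- (RInt_Chasles_R _ a c b); auto.
    assert (H1 : RInt (fun x => Rabs (Derive g x)) a c <= 2 ^ S n * M).
    { apply IH; [lra| intros; apply HM; lra|].
      intros l Hl Hzl. assert (H := Hz (c :: l)). simpl in H.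
      assert (S (length l) <= S n)%nat; [|lia]. apply H.
      constructor; auto. intro Hin. apply Hzl in Hin; lra.
      intros z [<-|Hin]. split; auto. apply Hzl in Hin. split; [lra| tauto]. }
    assert (H2 : RInt (fun x => Rabs (Derive g x)) c b <= 2 ^ S n * M).
    { apply IH; [lra| intros; apply HM; lra|].
      intros l Hl Hzl. assert (H := Hz (c :: l)). simpl in H.
      assert (S (length l) <= S n)%nat; [|lia]. apply H.
      constructor; auto. intro Hin. apply Hzl in Hin; lra.
      intros z [<-|Hin]. split; auto. apply Hzl in Hin. split; [lra| tauto]. }
    simpl in *. lra.
  - eapply Rle_trans. apply (nozero_bound g Hd Hc a b M Hab HM).
    intros c Hc' Hc0; apply Hn; exists c; auto.
    assert (1 <= 2 ^ n) by (apply pow_R1_Rle; lra). simpl. nra.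
Qed.

Lemma osc (g W V : R -> R) N B M a b :
  (forall x, ex_derive g x) -> (forall x, continuous (Derive g) x) -> at_most_zeros (Derive g) N ->
  (forall x, is_derive V x (W x)) -> (forall x, continuous W x) -> (forall x, Rabs (V x) <= B) ->
  a <= b -> (forall x, a <= x <= b -> Rabs (g x) <= M) ->
  Rabs (RInt (fun x => g x * W x) a b) <= (2 + 2 ^ (S N)) * M * B.
Proof.
  intros Hd Hc HZ HV HW HB Hab HM.
  assert (HM0 : 0 <= M) by (pose proof (HM a ltac:(lra)); pose proof (Rabs_pos (g a)); lra).
  assert (HB0 : 0 <= B) by (pose proof (HB 0); pose proof (Rabs_pos (V 0)); lra).
  assert (Hcg : forall x, continuous g x) by (intros; apply exd_cont; auto).
  assert (Hcv : forall x, continuous V x) by (intros; apply exd_cont; eexists; eauto).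
  assert (Hp : is_RInt (fun x => Derive g x * V x + g x * W x) a b (g b * V b - g a * V a)).
  { apply (is_RInt_derive (V:=R_CompleteNormedModule) (fun x => g x * V x)).
    - intros x _. apply (is_derive_mult (K:=R_AbsRing) g V x). apply Derive_correct; auto. auto.
      intros; apply Rmult_comm.
    - intros x _. apply cont_plus; apply cont_mult; auto. }
  apply (is_RInt_unique (V:=R_CompleteNormedModule)) in Hp.
  rewrite RInt_plus_R in Hp by (apply ex_RInt_cont; intros; apply cont_mult; auto).
  assert (E : RInt (fun x => g x * W x) a b = g b * V b - g a * V a - RInt (fun x => Derive g x * V x) a b) by lra.
  rewrite E.
  assert (H1 : Rabs (RInt (fun x => Derive g x * V x) a b) <= B * (2 ^ S N * M)).
  { eapply Rle_trans. apply abs_RInt_le; auto. apply ex_RInt_cont; intros; apply cont_mult; auto.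
    eapply Rle_trans. apply RInt_le with (g := fun x => B * Rabs (Derive g x)); auto.
    apply ex_RInt_cont; intros; apply cont_abs; apply cont_mult; auto.
    apply ex_RInt_cont; intros; apply cont_mult. apply cont_const. apply cont_abs; auto.
    intros x _. rewrite Rabs_mult. rewrite Rmult_comm. apply Rmult_le_compat_r; auto. apply Rabs_pos.
    rewrite RInt_scal_R. apply Rmult_le_compat_l; auto.
    apply tv_bound; auto. intros l Hl Hzl. apply HZ; auto. intros z Hin; apply Hzl; auto.
    apply ex_RInt_cont; intros; apply cont_abs; auto. }
  pose proof (HM a ltac:(lra)). pose proof (HM b ltac:(lra)).
  pose proof (HB a). pose proof (HB b).
  assert (Q1 : Rabs (g b * V b) <= M * B) by (rewrite Rabs_mult; apply Rmult_le_compat; auto; apply Rabs_pos).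
  assert (Q2 : Rabs (g a * V a) <= M * B) by (rewrite Rabs_mult; apply Rmult_le_compat; auto; apply Rabs_pos).
  apply Rabs_le_between in Q1. apply Rabs_le_between in Q2. apply Rabs_le_between in H1.
  apply Rabs_le. simpl in *. lra.
Qed.

Lemma c2_1 h x y : continuity_2d_pt h x y -> continuous (fun t => h t y) x.
Proof.
  intros H. apply filterlim_locally. intros eps. destruct (H eps) as [d Hd].
  exists d. intros t Ht. apply ballR. apply Hd. exact Ht. rewrite Rminus_diag, Rabs_R0. apply cond_pos.
Qed.
Lemma c2_2 h x y : continuity_2d_pt h x y -> continuous (fun t => h x t) y.
Proof.
  intros H. apply filterlim_locally. intros eps. destruct (H eps) as [d Hd].
  exists d. intros t Ht. apply ballR. apply Hd. rewrite Rminus_diag, Rabs_R0. apply cond_pos. exact Ht.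
Qed.
Lemma c2_swap h x y : continuity_2d_pt h x y -> continuity_2d_pt (fun u v => h v u) y x.
Proof. intros H eps. destruct (H eps) as [d Hd]. exists d. intros u v H1 H2. apply Hd; auto. Qed.

Lemma c2_of_cont (f : R -> R -> R) : (forall p, continuous (fun q : R * R => f (fst q) (snd q)) p) ->
  forall x y, continuity_2d_pt f x y.
Proof. intros H x y. apply continuity_2d_pt_filterlim. apply (H (x, y)). Qed.

Lemma RInt_zero a b : RInt (fun _ => 0) a b = 0.
Proof. rewrite RInt_const. apply Rmult_0_r. Qed.

Lemma param_cont h (Hh : forall x y, continuity_2d_pt h x y) a b y0 :
  continuous (fun y => RInt (fun x => h x y) a b) y0.
Proof.
  apply filterlim_locally. intros eps.
  assert (Hp : 0 < eps / (Rabs (b - a) + 1)).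
  { apply Rdiv_lt_0_compat. apply cond_pos. pose proof (Rabs_pos (b - a)); lra. }
  destruct (uniform_continuity_2d_1d h (Rmin a b) (Rmax a b) y0 (fun x _ => Hh x y0) (mkposreal _ Hp)) as [d Hd].
  exists d. intros y Hy. apply ballR. change (Rabs (y - y0) < d) in Hy.
  rewrite <- RInt_minus_R by (apply (ex_RInt_continuous (V:=R_CompleteNormedModule)); intros; apply c2_1; auto).
  eapply Rle_lt_trans.
  apply (norm_RInt_le_const_abs (V:=R_NormedModule) (fun x => h x y - h x y0) a b _ (eps / (Rabs (b - a) + 1))).
  2:{ apply (RInt_correct (V:=R_CompleteNormedModule)).
      apply (ex_RInt_continuous (V:=R_CompleteNormedModule)); intros; apply cont_minus; apply c2_1; auto. }
  - intros x Hx. apply Rlt_le. apply (Hd x y0 x y); auto.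
    + pose proof (cond_pos d); lra.
    + destruct (Rabs_le_between (y - y0) d) as [Hl _]. specialize (Hl (Rlt_le _ _ Hy)). lra.
    + rewrite Rminus_diag, Rabs_R0. apply cond_pos.
  - pose proof (Rabs_pos (b - a)). pose proof (cond_pos eps).
    apply Rmult_lt_reg_r with (Rabs (b - a) + 1). lra.
    field_simplify; try lra. 
Qed.

Lemma dI h (Hh : forall x y, continuity_2d_pt h x y) a t x0 :
  is_derive (fun u => RInt (fun x => h x t) a u) x0 (h x0 t).
Proof.
  apply (is_derive_RInt (V:=R_NormedModule) (fun x => h x t) (fun u => RInt (fun x => h x t) a u) a x0).
  - exists (mkposreal 1 Rlt_0_1). intros y _. apply (RInt_correct (V:=R_CompleteNormedModule)).
    apply (ex_RInt_continuous (V:=R_CompleteNormedModule)); intros; apply c2_1; auto.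
  - apply c2_1; auto.
Qed.

Lemma fubini h (Hh : forall x y, continuity_2d_pt h x y) a b c d :
  RInt (fun y => RInt (fun x => h x y) a b) c d = RInt (fun x => RInt (fun y => h x y) c d) a b.
Proof.
  set (D := fun u => RInt (fun y => h u y) c d).
  assert (HD : forall u, continuous D u).
  { intros u. apply (param_cont (fun y x => h x y)). intros; apply c2_swap; auto. }
  assert (HP : forall u, is_derive (fun u => RInt (fun y => RInt (fun x => h x y) a u) c d) u (D u)).
  { intros u.
    assert (H := is_derive_RInt_param (fun u t => RInt (fun x => h x t) a u) c d u).
    assert (Heq : RInt (fun t => Derive (fun z => RInt (fun x => h x t) a z) u) c d = D u).
    { apply RInt_ext. intros; apply is_derive_unique; apply dI; auto. }
    cbv beta in H. rewrite Heq in H. apply H.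
    - exists (mkposreal 1 Rlt_0_1). intros y _ t _. eexists. apply dI; auto.
    - intros t _. apply continuity_2d_pt_ext with (f := h).
      intros; symmetry; apply is_derive_unique; apply dI; auto. auto.
    - exists (mkposreal 1 Rlt_0_1). intros y _.
      apply (ex_RInt_continuous (V:=R_CompleteNormedModule)); intros.
      apply (param_cont (fun x t => h x t)); auto. }
  assert (HQ : forall u, is_derive (fun u => RInt D a u) u (D u)).
  { intros u. apply (is_derive_RInt (V:=R_NormedModule) D (fun u => RInt D a u) a u).
    - exists (mkposreal 1 Rlt_0_1). intros y _. apply (RInt_correct (V:=R_CompleteNormedModule)).
      apply (ex_RInt_continuous (V:=R_CompleteNormedModule)); intros; auto.
    - auto. }
  assert (I1 := is_RInt_derive (V:=R_CompleteNormedModule) _ D a b (fun x _ => HP x) (fun x _ => HD x)).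
  assert (I2 := is_RInt_derive (V:=R_CompleteNormedModule) _ D a b (fun x _ => HQ x) (fun x _ => HD x)).
  apply (is_RInt_unique (V:=R_CompleteNormedModule)) in I1.
  apply (is_RInt_unique (V:=R_CompleteNormedModule)) in I2.
  unfold minus, plus, opp in I1, I2; simpl in I1, I2.
  rewrite RInt_point0 in I2.
  rewrite (RInt_ext (fun y => RInt (fun x => h x y) a a) (fun _ => 0)) in I1 by (intros; apply RInt_point0).
  rewrite RInt_zero in I1. lra.
Qed.

Lemma Rabs_sub_le x y : Rabs (x - y) <= Rabs x + Rabs y.
Proof. unfold Rminus. rewrite <- (Rabs_Ropp y). apply Rabs_triang. Qed.

Lemma div_nonneg a c : 0 <= a -> 0 < c -> 0 <= a / c.
Proof. intros. unfold Rdiv. apply Rmult_le_pos; auto. left; apply Rinv_0_lt_compat; auto. Qed.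

Lemma lim_minus {T} (F : (T -> Prop) -> Prop) {FF : Filter F} (u v : T -> R) a b :
  filterlim u F (locally a) -> filterlim v F (locally b) ->
  filterlim (fun r => u r - v r) F (locally (a - b)).
Proof.
  intros Hu Hv. apply filterlim_locally. intros eps.
  pose proof (proj1 (filterlim_locally u a) Hu (pos_div_2 eps)) as H1.
  pose proof (proj1 (filterlim_locally v b) Hv (pos_div_2 eps)) as H2.
  eapply filter_imp; [|exact (filter_and _ _ H1 H2)]. intros r [A1 A2].
  assert (A1' : Rabs (u r - a) < eps / 2) by exact A1.
  assert (A2' : Rabs (v r - b) < eps / 2) by exact A2. apply ballR.
  replace (u r - v r - (a - b)) with ((u r - a) - (v r - b)) by ring.
  pose proof (Rabs_sub_le (u r - a) (v r - b)). lra.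
Qed.

Lemma lim_plus {T} (F : (T -> Prop) -> Prop) {FF : Filter F} (u v : T -> R) a b :
  filterlim u F (locally a) -> filterlim v F (locally b) ->
  filterlim (fun r => u r + v r) F (locally (a + b)).
Proof.
  intros Hu Hv. apply filterlim_locally. intros eps.
  pose proof (proj1 (filterlim_locally u a) Hu (pos_div_2 eps)) as H1.
  pose proof (proj1 (filterlim_locally v b) Hv (pos_div_2 eps)) as H2.
  eapply filter_imp; [|exact (filter_and _ _ H1 H2)]. intros r [A1 A2].
  assert (A1' : Rabs (u r - a) < eps / 2) by exact A1.
  assert (A2' : Rabs (v r - b) < eps / 2) by exact A2. apply ballR.
  replace (u r + v r - (a + b)) with ((u r - a) + (v r - b)) by ring.
  pose proof (Rabs_triang (u r - a) (v r - b)). lra.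
Qed.

Lemma lim_ext {T} (F : (T -> Prop) -> Prop) {FF : Filter F} (u v : T -> R) a :
  (forall r, u r = v r) -> filterlim u F (locally a) -> filterlim v F (locally a).
Proof. intros E H. eapply filterlim_ext; eauto. Qed.

Lemma c2_of_1 (w : R -> R) x y : continuous w x -> continuity_2d_pt (fun u v => w u) x y.
Proof.
  intros H eps. pose proof (proj1 (filterlim_locally w (w x)) H eps) as [d Hd].
  exists d. intros u v Hu _. apply Hd. exact Hu.
Qed.
Lemma c2_of_1' (w : R -> R) x y : continuous w y -> continuity_2d_pt (fun u v => w v) x y.
Proof.
  intros H eps. pose proof (proj1 (filterlim_locally w (w y)) H eps) as [d Hd].
  exists d. intros u v _ Hv. apply Hd. exact Hv.
Qed.

Ltac ctac :=
  match goal with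
  | |- continuous (fun _ => ?c) _ => apply cont_const
  | |- continuous (fun y => @?a y * @?b y) _ => apply (cont_mult a b); ctac
  | |- continuous (fun y => @?a y - @?b y) _ => apply (cont_minus a b); ctac
  | |- continuous (fun y => @?a y + @?b y) _ => apply (cont_plus a b); ctac
  | |- continuous (fun y => Rabs (@?a y)) _ => apply (cont_abs a); ctac
  | _ => first [assumption | solve [auto] | idtac]
  end.

Lemma ibp (u du v dv : R -> R) a b :
  (forall x, is_derive u x (du x)) -> (forall x, continuous du x) ->
  (forall x, is_derive v x (dv x)) -> (forall x, continuous dv x) ->
  RInt (fun x => u x * dv x) a b = u b * v b - u a * v a - RInt (fun x => du x * v x) a b.
Proof.
  intros Hu Hdu Hv Hdv.
  assert (Hcu : forall x, continuous u x) by (intros; apply exd_cont; eexists; eauto).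
  assert (Hcv : forall x, continuous v x) by (intros; apply exd_cont; eexists; eauto).
  assert (Hp : is_RInt (fun x => du x * v x + u x * dv x) a b (u b * v b - u a * v a)).
  { apply (is_RInt_derive (V:=R_CompleteNormedModule) (fun x => u x * v x)).
    - intros x _. apply (is_derive_mult (K:=R_AbsRing) u v x); auto. intros; apply Rmult_comm.
    - intros x _. apply cont_plus; apply cont_mult; auto. }
  apply (is_RInt_unique (V:=R_CompleteNormedModule)) in Hp.
  rewrite RInt_plus_R in Hp by (apply ex_RInt_cont; intros; apply cont_mult; auto). lra.
Qed.

Lemma osc' (g dg W V : R -> R) N B M a b :
  (forall x, is_derive g x (dg x)) -> (forall x, continuous dg x) -> at_most_zeros dg N ->
  (forall x, is_derive V x (W x)) -> (forall x, continuous W x) -> (forall x, Rabs (V x) <= B) ->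
  a <= b -> (forall x, a <= x <= b -> Rabs (g x) <= M) ->
  Rabs (RInt (fun x => g x * W x) a b) <= (2 + 2 ^ (S N)) * M * B.
Proof.
  intros Hg Hdg HZ. assert (E : forall x, Derive g x = dg x) by (intros; apply is_derive_unique; auto).
  apply osc.
  - intros; eexists; eauto.
  - intros x. apply continuous_ext with dg; auto.
  - intros l Hl Hz. apply HZ; auto. intros z Hin. rewrite <- E. auto.
Qed.

Lemma norm2_ge_x x y : Rabs x <= norm2 x y.
Proof.
  unfold norm2. rewrite <- sqrt_Rsqr_abs. apply sqrt_le_1_alt. unfold Rsqr. nra.
Qed.
Lemma norm2_ge_y x y : Rabs y <= norm2 x y.
Proof.
  unfold norm2. rewrite <- sqrt_Rsqr_abs. apply sqrt_le_1_alt. unfold Rsqr. nra.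
Qed.
Lemma norm2_sq x y : norm2 x y ^ 2 = x ^ 2 + y ^ 2.
Proof. unfold norm2. apply pow2_sqrt. nra. Qed.
Lemma norm2_swap x y : norm2 x y = norm2 y x.
Proof. unfold norm2. f_equal. ring. Qed.

Section Core.
Variables (f fx fxx fy : R -> R -> R) (N : nat) (C B : R).
Variables (w1 W1 V1 w2 W2 : R -> R) (Phi : R -> R).
Hypothesis Hf : forall x y, continuity_2d_pt f x y.
Hypothesis Hfx : forall x y, is_derive (fun t => f t y) x (fx x y).
Hypothesis Hfxc : forall x y, continuous (fun t => fx t y) x.
Hypothesis Hfxx : forall x y, is_derive (fun t => fx t y) x (fxx x y).
Hypothesis Hfxxc : forall x y, continuous (fun t => fxx t y) x.
Hypothesis Hfy : forall x y, is_derive (fun t => f x t) y (fy x y).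
Hypothesis Hfyc : forall x y, continuous (fun t => fy x t) y.
Hypothesis HZ1 : forall y, at_most_zeros (fun x => fxx x y) N.
Hypothesis HZ2 : forall x, at_most_zeros (fun y => fy x y) N.
Hypothesis HC : 0 < C.
Hypothesis HB0 : forall x y, 1 < norm2 x y -> Rabs (f x y) <= C / norm2 x y.
Hypothesis HB1 : forall x y, 1 < norm2 x y -> Rabs (fx x y) <= C / (norm2 x y) ^ 2.
Hypothesis Hw1 : forall x, is_derive W1 x (w1 x).
Hypothesis HW1 : forall x, is_derive V1 x (W1 x).
Hypothesis Hw1c : forall x, continuous w1 x.
Hypothesis Hw2 : forall x, is_derive W2 x (w2 x).
Hypothesis Hw2c : forall x, continuous w2 x.
Hypothesis HBw : forall x, Rabs (w1 x) <= B /\ Rabs (W1 x) <= B /\ Rabs (V1 x) <= B /\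
                           Rabs (w2 x) <= B /\ Rabs (W2 x) <= B.
Hypothesis HPhi : forall y, filterlim (fun r => RInt (fun x => f x y * w1 x) (-r) r)
                     (Rbar_locally p_infty) (locally (Phi y)).

Let K := 2 + 2 ^ S N.

Lemma Kpos : 0 < K.
Proof. unfold K. pose proof (pow_lt 2 (S N) ltac:(lra)). lra. Qed.
Lemma Bpos : 0 <= B.
Proof. destruct (HBw 0) as [H _]. pose proof (Rabs_pos (w1 0)). lra. Qed.
Lemma W1c x : continuous W1 x.
Proof. apply exd_cont. eexists; eauto. Qed.
Lemma W2c x : continuous W2 x.
Proof. apply exd_cont. eexists; eauto. Qed.
Lemma fc1 x y : continuous (fun t => f t y) x.
Proof. apply c2_1; auto. Qed.
Lemma fc2 x y : continuous (fun t => f x t) y.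
Proof. apply c2_2; auto. Qed.

Lemma fb x y : 2 <= Rabs x -> Rabs (f x y) <= C / Rabs x.
Proof.
  intros H. pose proof (norm2_ge_x x y).
  eapply Rle_trans. apply HB0. lra. unfold Rdiv. apply Rmult_le_compat_l. lra.
  apply Rinv_le_contravar; lra.
Qed.
Lemma fb' x y : 2 <= Rabs y -> Rabs (f x y) <= C / Rabs y.
Proof.
  intros H. pose proof (norm2_ge_y x y).
  eapply Rle_trans. apply HB0. lra. unfold Rdiv. apply Rmult_le_compat_l. lra.
  apply Rinv_le_contravar; lra.
Qed.
Lemma fxb x y m : 2 <= m -> m <= Rabs x -> Rabs (fx x y) <= C / (m ^ 2 + y ^ 2).
Proof.
  intros H1 H2. pose proof (norm2_ge_x x y).
  eapply Rle_trans. apply HB1. lra. rewrite norm2_sq. unfold Rdiv. apply Rmult_le_compat_l. lra.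
  apply Rinv_le_contravar. nra. rewrite <- (pow2_abs x). nra.
Qed.
Lemma fxb' x y : 2 <= Rabs y -> Rabs (fx x y) <= C / y ^ 2.
Proof.
  intros H. pose proof (norm2_ge_y x y).
  eapply Rle_trans. apply HB1. lra. rewrite norm2_sq. unfold Rdiv. apply Rmult_le_compat_l. lra.
  apply Rinv_le_contravar. rewrite <- (pow2_abs y). nra. nra.
Qed.

Definition Hn a b y := RInt (fun x => fx x y * W1 x) a b.
Definition g r y := RInt (fun x => f x y * w1 x) (-r) r.
Definition bnd r y := f r y * W1 r - f (-r) y * W1 (-r).
Definition G r y := g r y - bnd r y.

Lemma Hn_ex a b y : ex_RInt (fun x => fx x y * W1 x) a b.
Proof. apply ex_RInt_cont. intros; apply cont_mult; auto. apply W1c. Qed.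

Lemma tailB a b y m : a <= b -> 2 <= m -> (forall x, a <= x <= b -> m <= Rabs x) ->
  Rabs (Hn a b y) <= K * (C / (m ^ 2 + y ^ 2)) * B.
Proof.
  intros Hab Hm Hx. unfold Hn, K.
  apply (osc' (fun t => fx t y) (fun t => fxx t y) W1 V1 N B); auto.
  - intros; apply W1c.
  - intros x; apply HBw.
  - intros x Hx'. apply fxb; auto.
Qed.

Lemma ibp_g r y : G r y = - Hn (-r) r y.
Proof.
  unfold G, g, bnd, Hn.
  rewrite (ibp (fun t => f t y) (fun t => fx t y) W1 w1); auto. ring.
Qed.

Lemma g_diff n r y : 2 <= n <= r ->
  Rabs (G r y - G n y) <= 2 * (K * (C / (n ^ 2 + y ^ 2)) * B).
Proof.
  intros Hn'. rewrite !ibp_g.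
  assert (E : Hn (-r) r y = Hn (-r) (-n) y + Hn (-n) n y + Hn n r y).
  { unfold Hn. rewrite (RInt_Chasles_R _ (-r) (-n) n) by apply Hn_ex.
    rewrite RInt_Chasles_R by apply Hn_ex. reflexivity. }
  rewrite E.
  assert (T1 : Rabs (Hn (-r) (-n) y) <= K * (C / (n ^ 2 + y ^ 2)) * B).
  { apply tailB; try lra. intros x Hx. rewrite Rabs_left by lra. lra. }
  assert (T2 : Rabs (Hn n r y) <= K * (C / (n ^ 2 + y ^ 2)) * B).
  { apply tailB; try lra. intros x Hx. rewrite Rabs_right by lra. lra. }
  replace (- (Hn (- r) (- n) y + Hn (- n) n y + Hn n r y) - - Hn (- n) n y) with
    (- (Hn (- r) (- n) y + Hn n r y)) by ring.
  rewrite Rabs_Ropp. pose proof (Rabs_triang (Hn (- r) (- n) y) (Hn n r y)). lra.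
Qed.

Lemma bnd_lim y : filterlim (fun r => bnd r y) (Rbar_locally p_infty) (locally 0).
Proof.
  apply filterlim_locally. intros eps. pose proof Bpos as HB. pose proof (cond_pos eps).
  exists (2 + 2 * C * B / eps). intros r Hr. apply ballR.
  assert (Hr2 : 2 < r). { assert (0 <= 2 * C * B / eps). { apply div_nonneg; nra. } lra. }
  assert (A1 : Rabs (f r y) <= C / r).
  { pose proof (fb r y). rewrite Rabs_right in H0 by lra. apply H0. lra. }
  assert (A2 : Rabs (f (-r) y) <= C / r).
  { pose proof (fb (-r) y). rewrite Rabs_left in H0 by lra. rewrite Ropp_involutive in H0. apply H0. lra. }
  destruct (HBw r) as [_ [B1 _]]. destruct (HBw (-r)) as [_ [B2 _]].
  unfold bnd. rewrite Rminus_0_r.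
  eapply Rle_lt_trans. apply Rabs_sub_le. rewrite !Rabs_mult.
  assert (Rabs (f r y) * Rabs (W1 r) <= C / r * B) by (apply Rmult_le_compat; auto; apply Rabs_pos).
  assert (Rabs (f (- r) y) * Rabs (W1 (- r)) <= C / r * B) by (apply Rmult_le_compat; auto; apply Rabs_pos).
  assert (C / r * B + C / r * B < eps); [|lra].
  assert (Hl : 2 * C * B / eps < r) by lra.
  apply Rlt_div_l in Hl; [|lra].
  replace (C / r * B + C / r * B) with ((2 * C * B) / r) by (field; lra).
  apply Rlt_div_l; lra.
Qed.

Lemma En_bound n y : 2 <= n -> Rabs (Phi y - G n y) <= 2 * (K * (C / (n ^ 2 + y ^ 2)) * B).
Proof.
  intros Hn'.
  assert (HL : filterlim (fun r => G r y) (Rbar_locally p_infty) (locally (Phi y - 0))).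
  { apply lim_minus. apply Rbar_locally_filter. apply HPhi. apply bnd_lim. }
  rewrite <- (Rminus_0_r (Phi y)).
  apply (lim_bound (Rbar_locally p_infty) (fun r => G r y)); auto.
  exists n. intros r Hr. apply g_diff. lra.
Qed.

Lemma En_unif n y : 2 <= n -> Rabs (Phi y - G n y) <= 2 * K * C * B / n.
Proof.
  intros Hn'. eapply Rle_trans. apply En_bound; auto.
  pose proof Kpos. pose proof Bpos.
  assert (C / (n ^ 2 + y ^ 2) <= C / n).
  { unfold Rdiv. apply Rmult_le_compat_l. lra. apply Rinv_le_contravar. lra. nra. }
  replace (2 * K * C * B / n) with (2 * (K * (C / n) * B)) by (field; lra).
  apply Rmult_le_compat_l. lra. apply Rmult_le_compat_r. auto. apply Rmult_le_compat_l; lra.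
Qed.

Lemma g_cont r y0 : continuous (fun y => g r y) y0.
Proof.
  unfold g. apply (param_cont (fun x y => f x y * w1 x)).
  intros. apply continuity_2d_pt_mult; auto. apply c2_of_1; auto.
Qed.

Lemma G_cont r y0 : continuous (fun y => G r y) y0.
Proof.
  unfold G, bnd. apply cont_minus. apply g_cont.
  apply cont_minus; apply cont_mult; try apply cont_const; apply fc2.
Qed.

Lemma Phi_cont y0 : continuous Phi y0.
Proof.
  apply filterlim_locally. intros eps. pose proof (cond_pos eps) as He.
  pose proof Kpos. pose proof Bpos.
  assert (KCB : 0 <= K * C * B) by (apply Rmult_le_pos; [apply Rmult_le_pos|]; lra).
  set (n := 2 + 3 * (2 * K * C * B) / eps).
  assert (Hn2 : 2 <= n). { unfold n. assert (0 <= 3 * (2 * K * C * B) / eps). apply div_nonneg; lra. lra. }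
  assert (Hsmall : 2 * K * C * B / n < eps / 3).
  { apply Rlt_div_l. lra. unfold n.
    assert (0 <= 3 * (2 * K * C * B) / eps) by (apply div_nonneg; lra).
    replace (eps / 3 * (2 + 3 * (2 * K * C * B) / eps)) with (2 * eps / 3 + 2 * K * C * B) by (field; lra).
    lra. }
  pose proof (proj1 (filterlim_locally _ _) (G_cont n y0) (mkposreal (eps / 3) ltac:(lra))) as Hc.
  eapply filter_imp; [|exact Hc]. intros y Hy.
  assert (Hy' : Rabs (G n y - G n y0) < eps / 3) by exact Hy.
  apply ballR.
  pose proof (En_unif n y Hn2). pose proof (En_unif n y0 Hn2).
  replace (Phi y - Phi y0) with ((Phi y - G n y) + (G n y - G n y0) - (Phi y0 - G n y0)) by ring.
  eapply Rle_lt_trans. apply Rabs_sub_le.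
  pose proof (Rabs_triang (Phi y - G n y) (G n y - G n y0)). lra.
Qed.

Let A2 := 2 * K * C * B + 4 * C * B.

Lemma A2pos : 0 <= A2.
Proof. unfold A2. pose proof Kpos. pose proof Bpos.
  assert (0 <= K * C * B) by (apply Rmult_le_pos; [apply Rmult_le_pos|]; lra).
  assert (0 <= C * B) by (apply Rmult_le_pos; lra). lra. Qed.

Lemma Phi_decay y : 2 <= Rabs y -> Rabs (Phi y) <= A2 / y ^ 2.
Proof.
  intros Hy. pose proof Kpos. pose proof Bpos.
  assert (Hy2 : 4 <= y ^ 2) by (rewrite <- pow2_abs; nra).
  pose proof (En_bound 2 y ltac:(lra)) as E1.
  assert (E2 : Rabs (G 2 y) <= 4 * (C / y ^ 2 * B)).
  { rewrite ibp_g, Rabs_Ropp. unfold Hn.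
    replace 4 with (2 - - 2) by ring.
    apply abs_RInt_le_const. lra. apply Hn_ex.
    intros t Ht. rewrite Rabs_mult. apply Rmult_le_compat; try apply Rabs_pos.
    apply fxb'; auto. apply HBw. }
  assert (E3 : C / (2 ^ 2 + y ^ 2) <= C / y ^ 2).
  { unfold Rdiv. apply Rmult_le_compat_l. lra. apply Rinv_le_contravar; lra. }
  assert (E4 : 2 * (K * (C / (2 ^ 2 + y ^ 2)) * B) <= 2 * K * B * (C / y ^ 2)).
  { assert (0 <= K * B) by (apply Rmult_le_pos; lra).
    replace (2 * (K * (C / (2 ^ 2 + y ^ 2)) * B)) with (2 * (K * B) * (C / (2 ^ 2 + y ^ 2))) by ring.
    replace (2 * K * B * (C / y ^ 2)) with (2 * (K * B) * (C / y ^ 2)) by ring.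
    apply Rmult_le_compat_l; lra. }
  replace (A2 / y ^ 2) with (2 * K * B * (C / y ^ 2) + 4 * (C / y ^ 2 * B)) by (assert (y <> 0) by (intro Hy0; rewrite Hy0, Rabs_R0 in Hy; lra); unfold A2; field; auto).
  replace (Phi y) with ((Phi y - G 2 y) + G 2 y) by ring.
  pose proof (Rabs_triang (Phi y - G 2 y) (G 2 y)). lra.
Qed.

Lemma int_inv_sq s t : s <= t -> (0 < s \/ t < 0) -> is_RInt (fun y => / y ^ 2) s t (/ s - / t).
Proof.
  intros Hst Hs.
  assert (Hnz : forall x, Rmin s t <= x <= Rmax s t -> x <> 0).
  { intros x Hx. rewrite Rmin_left in Hx by lra. rewrite Rmax_right in Hx by lra. lra. }
  assert (H : is_RInt (fun y => / y ^ 2) s t (minus (- / t) (- / s))).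
  { apply (is_RInt_derive (V:=R_CompleteNormedModule) (fun y => - / y)).
    - intros x Hx. pose proof (Hnz x Hx). auto_derive. auto. field. auto.
    - intros x Hx. pose proof (Hnz x Hx). apply exd_cont. auto_derive; repeat split; try apply pow_nonzero; auto. }
  replace (/ s - / t) with (minus (- / t) (- / s)); auto.
  unfold minus, plus, opp; simpl; ring.
Qed.

Lemma Phiw2_ex a b : ex_RInt (fun y => Phi y * w2 y) a b.
Proof. apply ex_RInt_cont. intros; apply cont_mult; auto. apply Phi_cont. Qed.

Lemma tail_int_le s t R : 2 <= R -> s <= t -> (t <= -R \/ R <= s) ->
  Rabs (RInt (fun y => Phi y * w2 y) s t) <= A2 * B / R.
Proof.
  intros HR Hst Hc. pose proof A2pos. pose proof Bpos.
  assert (HAB : 0 <= A2 * B) by (apply Rmult_le_pos; lra).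
  assert (HI : is_RInt (fun y => A2 * B * / y ^ 2) s t (A2 * B * (/ s - / t))).
  { apply (is_RInt_scal (V:=R_NormedModule) (fun y => / y ^ 2)). apply int_inv_sq; auto. lra. }
  eapply Rle_trans. apply abs_RInt_le; auto. apply Phiw2_ex.
  eapply Rle_trans. apply RInt_le with (g := fun y => A2 * B * / y ^ 2); auto.
  apply ex_RInt_cont. intros; apply cont_abs; apply cont_mult; auto. apply Phi_cont.
  eexists; exact HI.
  - intros x Hx. assert (Hx2 : 2 <= Rabs x).
    { destruct Hc. rewrite Rabs_left by lra. lra. rewrite Rabs_right by lra. lra. }
    assert (x ^ 2 > 0) by (rewrite <- pow2_abs; nra).
    rewrite Rabs_mult. replace (A2 * B * / x ^ 2) with (A2 / x ^ 2 * B) by (field; lra).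
    apply Rmult_le_compat; try apply Rabs_pos. apply Phi_decay; auto. apply HBw.
  - rewrite (is_RInt_unique _ _ _ _ HI). unfold Rdiv. apply Rmult_le_compat_l; auto.
    destruct Hc.
    + assert (/ s <= 0) by (apply Rlt_le, Rinv_lt_0_compat; lra).
      assert (- / t <= / R). { rewrite <- Rinv_opp. apply Rinv_le_contravar; lra. }
      lra.
    + assert (/ t >= 0) by (apply Rle_ge, Rlt_le, Rinv_0_lt_compat; lra).
      assert (/ s <= / R) by (apply Rinv_le_contravar; lra). lra.
Qed.

Lemma tail_int s t R : 2 <= R -> (s <= -R /\ t <= -R) \/ (R <= s /\ R <= t) ->
  Rabs (RInt (fun y => Phi y * w2 y) s t) <= A2 * B / R.
Proof.
  intros HR Hc. destruct (Rle_dec s t).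
  - apply tail_int_le; auto. lra.
  - assert (E : RInt (fun y => Phi y * w2 y) s t = - RInt (fun y => Phi y * w2 y) t s).
    { pose proof (RInt_Chasles_R (fun y => Phi y * w2 y) s t s (Phiw2_ex _ _) (Phiw2_ex _ _)).
      rewrite RInt_point0 in H. lra. }
    rewrite E, Rabs_Ropp. apply tail_int_le; auto. lra. lra.
Qed.

Definition Sint (ab : R * R) := RInt (fun y => Phi y * w2 y) (fst ab) (snd ab).

Lemma S_cauchy : exists L, filterlim Sint (filter_prod (Rbar_locally m_infty) (Rbar_locally p_infty)) (locally L).
Proof.
  apply (filterlim_locally_cauchy (F := filter_prod (Rbar_locally m_infty) (Rbar_locally p_infty))).
  intros eps. pose proof (cond_pos eps). pose proof A2pos. pose proof Bpos.
  assert (HAB : 0 <= A2 * B) by (apply Rmult_le_pos; lra).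
  set (R0 := 2 + 4 * (A2 * B) / eps).
  assert (HR0 : 2 <= R0) by (unfold R0; assert (0 <= 4 * (A2 * B) / eps) by (apply div_nonneg; lra); lra).
  assert (Hsm : A2 * B / R0 < eps / 2).
  { apply Rlt_div_l. lra. unfold R0.
    replace (eps / 2 * (2 + 4 * (A2 * B) / eps)) with (eps + 2 * (A2 * B)) by (field; lra). lra. }
  exists (fun ab => fst ab < - R0 /\ R0 < snd ab). split.
  - apply (Filter_prod _ _ _ (fun a => a < - R0) (fun b => R0 < b)).
    exists (- R0). auto. exists R0. auto. intros; simpl; auto.
  - intros [a b] [a' b'] [Ha Hb] [Ha' Hb']. simpl in *. apply ballR. unfold Sint; simpl.
    rewrite <- (RInt_Chasles_R _ a' a b') by apply Phiw2_ex.
    rewrite <- (RInt_Chasles_R _ a b b') by apply Phiw2_ex.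
    replace (RInt (fun y : R => Phi y * w2 y) a' a +
      (RInt (fun y : R => Phi y * w2 y) a b + RInt (fun y : R => Phi y * w2 y) b b') -
      RInt (fun y : R => Phi y * w2 y) a b) with
      (RInt (fun y : R => Phi y * w2 y) a' a + RInt (fun y : R => Phi y * w2 y) b b') by ring.
    pose proof (tail_int a' a R0 HR0 ltac:(left; lra)).
    pose proof (tail_int b b' R0 HR0 ltac:(right; lra)).
    pose proof (Rabs_triang (RInt (fun y : R => Phi y * w2 y) a' a) (RInt (fun y : R => Phi y * w2 y) b b')).
    lra.
Qed.

Lemma atan_int n a b : 0 < n -> is_RInt (fun y => / (n ^ 2 + y ^ 2)) a b ((atan (b / n) - atan (a / n)) / n).
Proof.
  intros Hn'.
  assert (H : is_RInt (fun y => / (n ^ 2 + y ^ 2)) a b (minus (atan (b / n) / n) (atan (a / n) / n))).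
  { apply (is_RInt_derive (V:=R_CompleteNormedModule) (fun y => atan (y / n) / n)).
    - intros x _. auto_derive. auto. field. split. nra. lra.
    - intros x _. apply exd_cont. auto_derive. nra. }
  replace ((atan (b / n) - atan (a / n)) / n) with (minus (atan (b / n) / n) (atan (a / n) / n)); auto.
  unfold minus, plus, opp; simpl; field; lra.
Qed.

Local Hint Resolve fc1 fc2 Phi_cont G_cont W1c W2c : core.

Definition Idbl m n := RInt (fun y => RInt (fun x => f x y * w1 x * w2 y) (- n) n) (- m) m.

Lemma I_eq m n : Idbl m n = RInt (fun y => g n y * w2 y) (- m) m.
Proof.
  unfold Idbl. apply RInt_ext_R. intros y _.
  rewrite (RInt_ext_R _ (fun x => w2 y * (f x y * w1 x))) by (intros; ring).
  rewrite RInt_scal_R. unfold g; ring.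
  apply ex_RInt_cont; intros; apply cont_mult; [apply fc1|auto].
Qed.

Let c0 := 2 * K * C * B * B * (1 + PI).

Lemma c0pos : 0 <= c0.
Proof. unfold c0. pose proof Kpos. pose proof Bpos. pose proof PI_RGT_0.
  apply Rmult_le_pos; [|lra]. repeat apply Rmult_le_pos; lra. Qed.

Lemma I_close m n : 0 <= m -> 2 <= n -> Rabs (Idbl m n - Sint (- m, m)) <= c0 / n.
Proof.
  intros Hm Hn'. pose proof Kpos. pose proof Bpos. pose proof PI_RGT_0.
  rewrite I_eq. unfold Sint; simpl.
  rewrite (RInt_ext_R (fun y => g n y * w2 y)
     (fun y => (W1 n * (f n y * w2 y) - W1 (- n) * (f (- n) y * w2 y) - (Phi y - G n y) * w2 y) + Phi y * w2 y))
     by (intros; unfold G, bnd; ring).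
  assert (E1 : ex_RInt (fun y => f n y * w2 y) (- m) m).
  { apply ex_RInt_cont; intros; apply cont_mult; [apply fc2|auto]. }
  assert (E2 : ex_RInt (fun y => f (- n) y * w2 y) (- m) m).
  { apply ex_RInt_cont; intros; apply cont_mult; [apply fc2|auto]. }
  assert (E3 : ex_RInt (fun y => (Phi y - G n y) * w2 y) (- m) m).
  { apply ex_RInt_cont; intros; apply cont_mult; [apply cont_minus; [apply Phi_cont|apply G_cont]|auto]. }
  rewrite RInt_plus_R, !RInt_minus_R, !RInt_scal_R; auto.
  2-6: apply ex_RInt_cont; intros; ctac.
  set (X := RInt (fun x : R => f n x * w2 x) (- m) m).
  set (Y := RInt (fun x : R => f (- n) x * w2 x) (- m) m).
  set (Z := RInt (fun x : R => (Phi x - G n x) * w2 x) (- m) m).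
  assert (HX : Rabs X <= K * (C / n) * B).
  { unfold X, K. apply (osc' (fun t => f n t) (fun t => fy n t) w2 W2 N B (C / n) (- m) m (Hfy n) (Hfyc n) (HZ2 n) Hw2 Hw2c (fun x => proj2 (proj2 (proj2 (proj2 (HBw x)))))).
    lra. intros y _. pose proof (fb n y) as H2. rewrite Rabs_right in H2 by lra. apply H2. lra. }
  assert (HY : Rabs Y <= K * (C / n) * B).
  { unfold Y, K. apply (osc' (fun t => f (- n) t) (fun t => fy (- n) t) w2 W2 N B (C / n) (- m) m (Hfy (- n)) (Hfyc (- n)) (HZ2 (- n)) Hw2 Hw2c (fun x => proj2 (proj2 (proj2 (proj2 (HBw x)))))).
    lra. intros y _. pose proof (fb (- n) y) as H2. rewrite Rabs_left in H2 by lra.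
    rewrite Ropp_involutive in H2. apply H2. lra. }
  assert (KCB : 0 <= K * C * B) by (apply Rmult_le_pos; [apply Rmult_le_pos|]; lra).
  assert (HZ : Rabs Z <= 2 * K * C * B * B * PI / n).
  { assert (HI : is_RInt (fun y => 2 * K * C * B * B * / (n ^ 2 + y ^ 2)) (- m) m
                   (2 * K * C * B * B * ((atan (m / n) - atan (- m / n)) / n))).
    { apply (is_RInt_scal (V:=R_NormedModule) (fun y => / (n ^ 2 + y ^ 2))). apply atan_int. lra. }
    unfold Z. eapply Rle_trans. apply abs_RInt_le; auto. lra.
    eapply Rle_trans. apply RInt_le with (g := fun y => 2 * K * C * B * B * / (n ^ 2 + y ^ 2)); auto. lra.
    apply ex_RInt_cont; intros; apply cont_abs; ctac.
    eexists; exact HI.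
    - intros y _. rewrite Rabs_mult.
      replace (2 * K * C * B * B * / (n ^ 2 + y ^ 2)) with (2 * (K * (C / (n ^ 2 + y ^ 2)) * B) * B)
        by (field; nra).
      apply Rmult_le_compat; try apply Rabs_pos. apply En_bound; lra. apply HBw.
    - rewrite (is_RInt_unique _ _ _ _ HI).
      pose proof (atan_bound (m / n)). pose proof (atan_bound (- m / n)).
      assert (0 <= 2 * K * C * B * B) by (repeat apply Rmult_le_pos; lra).
      unfold Rdiv. rewrite <- !Rmult_assoc. apply Rmult_le_compat_r. left; apply Rinv_0_lt_compat; lra.
      apply Rmult_le_compat_l; lra. }
  replace (W1 n * X - W1 (- n) * Y - Z + RInt (fun x : R => Phi x * w2 x) (- m) m -
     RInt (fun y : R => Phi y * w2 y) (- m) m) with (W1 n * X - W1 (- n) * Y - Z) by ring.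
  destruct (HBw n) as [_ [HW1n _]]. destruct (HBw (- n)) as [_ [HW1m _]].
  assert (Q1 : Rabs (W1 n * X) <= B * (K * (C / n) * B)) by (rewrite Rabs_mult; apply Rmult_le_compat; auto; apply Rabs_pos).
  assert (Q2 : Rabs (W1 (- n) * Y) <= B * (K * (C / n) * B)) by (rewrite Rabs_mult; apply Rmult_le_compat; auto; apply Rabs_pos).
  replace (c0 / n) with (B * (K * (C / n) * B) + B * (K * (C / n) * B) + 2 * K * C * B * B * PI / n)
    by (unfold c0; field; lra).
  pose proof (Rabs_sub_le (W1 n * X - W1 (- n) * Y) Z). pose proof (Rabs_sub_le (W1 n * X) (W1 (- n) * Y)).
  lra.
Qed.

Lemma core : exists L, is_RInt_gen (fun y => Phi y * w2 y) (Rbar_locally m_infty) (Rbar_locally p_infty) L /\ filterlim (fun mn : R * R => Idbl (fst mn) (snd mn))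
    (filter_prod (Rbar_locally p_infty) (Rbar_locally p_infty)) (locally L).
Proof.
  destruct S_cauchy as [L HL]. exists L. split.
  - unfold is_RInt_gen. apply (filterlimi_lim_ext_loc Sint).
    apply filter_forall. intros [a b]. apply (RInt_correct (V:=R_CompleteNormedModule)). apply Phiw2_ex.
    exact HL.
  - apply filterlim_locally. intros eps. pose proof (cond_pos eps). pose proof c0pos.
    pose proof (proj1 (filterlim_locally Sint L) HL (pos_div_2 eps)) as H1.
    destruct H1 as [Q R' [M1 HQ] [M2 HR] HQR].
    set (T := 2 + 2 * c0 / eps).
    assert (HT : 2 <= T) by (unfold T; assert (0 <= 2 * c0 / eps) by (apply div_nonneg; lra); lra).
    apply (Filter_prod _ _ _ (fun m => Rmax (Rmax (- M1) M2) 0 < m) (fun n => T < n)).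
    + exists (Rmax (Rmax (- M1) M2) 0). auto.
    + exists T. auto.
    + intros m n Hm Hn. simpl. apply ballR.
      pose proof (Rmax_l (Rmax (- M1) M2) 0). pose proof (Rmax_r (Rmax (- M1) M2) 0).
      pose proof (Rmax_l (- M1) M2). pose proof (Rmax_r (- M1) M2).
      assert (HS : ball L (pos_div_2 eps) (Sint (- m, m))).
      { apply (HQR (- m) m). apply HQ. lra. apply HR. lra. }
      assert (HS' : Rabs (Sint (- m, m) - L) < eps / 2) by exact HS.
      pose proof (I_close m n ltac:(lra) ltac:(lra)).
      assert (c0 / n < eps / 2).
      { apply Rlt_div_l. lra. unfold T in Hn.
        assert (2 * c0 / eps * eps = 2 * c0) by (field; lra).
        assert (eps * (2 * c0 / eps) < eps * n) by (apply Rmult_lt_compat_l; lra).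
        nra. }
      replace (Idbl m n - L) with ((Idbl m n - Sint (- m, m)) + (Sint (- m, m) - L)) by ring.
      pose proof (Rabs_triang (Idbl m n - Sint (- m, m)) (Sint (- m, m) - L)). lra.
Qed.

End Core.

Definition cph k x := cos (- (k * x)).
Definition sph k x := sin (- (k * x)).
Definition cW k x := - sin (- (k * x)) / k.
Definition cV k x := - cos (- (k * x)) / (k * k).
Definition sW k x := cos (- (k * x)) / k.
Definition sV k x := - sin (- (k * x)) / (k * k).
Definition ph k (a : bool) := if a then cph k else sph k.
Definition phW k (a : bool) := if a then cW k else sW k.
Definition phV k (a : bool) := if a then cV k else sV k.

Lemma ph_d k a : k <> 0 -> forall x, is_derive (phW k a) x (ph k a x).
Proof. intros Hk x. destruct a; simpl; unfold cW, sW, cph, sph; auto_derive; auto; field; auto. Qed.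
Lemma phW_d k a : k <> 0 -> forall x, is_derive (phV k a) x (phW k a x).
Proof. intros Hk x. destruct a; simpl; unfold cV, sV, cW, sW; auto_derive; auto; field; auto. Qed.
Lemma ph_c k a x : continuous (ph k a) x.
Proof. apply exd_cont. destruct a; simpl; unfold cph, sph; auto_derive; auto. Qed.

Lemma ph_bounds k a x : k <> 0 ->
  Rabs (ph k a x) <= 1 /\ Rabs (phW k a x) <= / Rabs k /\ Rabs (phV k a x) <= / (k * k).
Proof.
  intros Hk. assert (Hk' : 0 < Rabs k) by (apply Rabs_pos_lt; auto).
  assert (Hkk : 0 < k * k) by (pose proof (Rsqr_pos_lt k Hk); unfold Rsqr in *; lra).
  assert (E1 : forall u, Rabs (u / k) = Rabs u / Rabs k) by (intros; apply Rabs_div; auto).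
  assert (E2 : forall u, Rabs (u / (k * k)) = Rabs u / (k * k)).
  { intros; rewrite Rabs_div by (apply Rmult_integral_contrapositive; auto). rewrite (Rabs_right (k*k)); lra. }
  assert (D1 : forall u, Rabs u <= 1 -> Rabs u / Rabs k <= / Rabs k).
  { intros u Hu. unfold Rdiv. rewrite <- (Rmult_1_l (/ Rabs k)) at 2. apply Rmult_le_compat_r; auto.
    left; apply Rinv_0_lt_compat; auto. }
  assert (D2 : forall u, Rabs u <= 1 -> Rabs u / (k * k) <= / (k * k)).
  { intros u Hu. unfold Rdiv. rewrite <- (Rmult_1_l (/ (k * k))) at 2. apply Rmult_le_compat_r; auto.
    left; apply Rinv_0_lt_compat; auto. }
  pose proof (COS_bound (- (k * x))). pose proof (SIN_bound (- (k * x))).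
  assert (Hc : Rabs (cos (- (k * x))) <= 1) by (apply Rabs_le; lra).
  assert (Hs : Rabs (sin (- (k * x))) <= 1) by (apply Rabs_le; lra).
  assert (F1 : forall u, Rabs u <= 1 -> Rabs (u / k) <= / Rabs k) by (intros; rewrite E1; auto).
  assert (F2 : forall u, Rabs u <= 1 -> Rabs (u / (k * k)) <= / (k * k)) by (intros; rewrite E2; auto).
  destruct a; simpl; unfold cph, sph, cW, sW, cV, sV; repeat split;
  first [apply Hc | apply Hs | apply F1; rewrite ?Rabs_Ropp; auto | apply F2; rewrite ?Rabs_Ropp; auto].
Qed.

Definition good (f fx fxx fy : R -> R -> R) (N : nat) (C : R) : Prop :=
  (forall x y, continuity_2d_pt f x y) /\
  (forall x y, is_derive (fun t => f t y) x (fx x y)) /\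
  (forall x y, continuous (fun t => fx t y) x) /\
  (forall x y, is_derive (fun t => fx t y) x (fxx x y)) /\
  (forall x y, continuous (fun t => fxx t y) x) /\
  (forall x y, is_derive (fun t => f x t) y (fy x y)) /\
  (forall x y, continuous (fun t => fy x t) y) /\
  (forall y, at_most_zeros (fun x => fxx x y) N) /\
  (forall x, at_most_zeros (fun y => fy x y) N) /\
  0 < C /\
  (forall x y, 1 < norm2 x y -> Rabs (f x y) <= C / norm2 x y) /\
  (forall x y, 1 < norm2 x y -> Rabs (fx x y) <= C / norm2 x y ^ 2).

Lemma core_ph f fx fxx fy N C k1 k2 a b Phi : k1 <> 0 -> k2 <> 0 -> good f fx fxx fy N C ->
  (forall y, filterlim (fun r => RInt (fun x => f x y * ph k1 a x) (- r) r) (Rbar_locally p_infty) (locally (Phi y))) ->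
  exists L : R, is_RInt_gen (fun y => Phi y * ph k2 b y) (Rbar_locally m_infty) (Rbar_locally p_infty) L /\
    filterlim (fun mn : R * R => Idbl f (ph k1 a) (ph k2 b) (fst mn) (snd mn))
      (filter_prod (Rbar_locally p_infty) (Rbar_locally p_infty)) (locally L).
Proof.
  intros Hk1 Hk2 [G1 [G2 [G3 [G4 [G5 [G6 [G7 [G8 [G9 [G10 [G11 G12]]]]]]]]]]] HPhi.
  set (B := 1 + / Rabs k1 + / (k1 * k1) + / Rabs k2 + / (k2 * k2)).
  assert (P1 : 0 <= / Rabs k1) by (left; apply Rinv_0_lt_compat, Rabs_pos_lt; auto).
  assert (P2 : 0 <= / Rabs k2) by (left; apply Rinv_0_lt_compat, Rabs_pos_lt; auto).
  assert (P3 : 0 <= / (k1 * k1)) by (left; apply Rinv_0_lt_compat; pose proof (Rsqr_pos_lt k1 Hk1); unfold Rsqr in *; lra).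
  assert (P4 : 0 <= / (k2 * k2)) by (left; apply Rinv_0_lt_compat; pose proof (Rsqr_pos_lt k2 Hk2); unfold Rsqr in *; lra).
  apply (core f fx fxx fy N C B (ph k1 a) (phW k1 a) (phV k1 a) (ph k2 b) (phW k2 b) Phi); auto.
  - apply ph_d; auto.
  - apply phW_d; auto.
  - apply ph_c.
  - apply ph_d; auto.
  - apply ph_c.
  - intros x. destruct (ph_bounds k1 a x Hk1) as [Q1 [Q2 Q3]].
    destruct (ph_bounds k2 b x Hk2) as [Q4 [Q5 Q6]]. unfold B. repeat split; lra.
Qed.

Lemma limC_fst {T} (F : (T -> Prop) -> Prop) {FF : Filter F} (u : T -> C) (z : C) :
  filterlim u F (locally z) -> filterlim (fun t => fst (u t)) F (locally (fst z)).
Proof.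
  intros H. apply filterlim_locally. intros eps.
  pose proof (proj1 (filterlim_locally u z) H eps) as H1.
  eapply filter_imp; [|exact H1]. intros t [Ht _]. exact Ht.
Qed.
Lemma limC_snd {T} (F : (T -> Prop) -> Prop) {FF : Filter F} (u : T -> C) (z : C) :
  filterlim u F (locally z) -> filterlim (fun t => snd (u t)) F (locally (snd z)).
Proof.
  intros H. apply filterlim_locally. intros eps.
  pose proof (proj1 (filterlim_locally u z) H eps) as H1.
  eapply filter_imp; [|exact H1]. intros t [_ Ht]. exact Ht.
Qed.
Lemma limC_pair {T} (F : (T -> Prop) -> Prop) {FF : Filter F} (u : T -> C) (a b : R) :
  filterlim (fun t => fst (u t)) F (locally a) -> filterlim (fun t => snd (u t)) F (locally b) ->
  filterlim u F (locally ((a, b) : C)).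
Proof.
  intros H1 H2. apply filterlim_locally. intros eps.
  pose proof (proj1 (filterlim_locally _ a) H1 eps) as G1.
  pose proof (proj1 (filterlim_locally _ b) H2 eps) as G2.
  eapply filter_imp; [|exact (filter_and _ _ G1 G2)]. intros t [A B]. split; [exact A | exact B].
Qed.

Lemma filterlim_swap (g : R -> R -> R) (F : (R -> Prop) -> Prop) (G : (R -> Prop) -> Prop) :
  filterlim (fun mn : R * R => g (snd mn) (fst mn)) (filter_prod F F) G ->
  filterlim (fun mn : R * R => g (fst mn) (snd mn)) (filter_prod F F) G.
Proof.
  intros H P HP. destruct (H P HP) as [Q R' HQ HR HQR].
  apply (Filter_prod _ _ _ R' Q); auto. intros x y Hx Hy. exact (HQR y x Hy Hx).
Qed.

Lemma I_swap f (Hf : forall x y, continuity_2d_pt f x y) a b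
  (Ha : forall x, continuous a x) (Hb : forall x, continuous b x) m n :
  Idbl (fun x y => f y x) b a m n = Idbl f a b n m.
Proof.
  unfold Idbl.
  transitivity (RInt (fun x => RInt (fun y => f y x * b x * a y) (- m) m) (- n) n).
  - apply (fubini (fun x y => f y x * b x * a y)). intros x y.
    apply continuity_2d_pt_mult. apply continuity_2d_pt_mult. apply c2_swap. auto.
    apply c2_of_1; auto. apply c2_of_1'; auto.
  - apply RInt_ext_R. intros y _. apply RInt_ext_R. intros x _. ring.
Qed.

Lemma uniq_swap f (Hf : forall x y, continuity_2d_pt f x y) a b
  (Ha : forall x, continuous a x) (Hb : forall x, continuous b x) L L' :
  filterlim (fun mn : R * R => Idbl f a b (fst mn) (snd mn)) (filter_prod (Rbar_locally p_infty) (Rbar_locally p_infty)) (locally L) ->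
  filterlim (fun mn : R * R => Idbl (fun x y => f y x) b a (fst mn) (snd mn)) (filter_prod (Rbar_locally p_infty) (Rbar_locally p_infty)) (locally L') ->
  L = L'.
Proof.
  intros H1 H2.
  assert (H3 : filterlim (fun mn : R * R => Idbl f a b (snd mn) (fst mn)) (filter_prod (Rbar_locally p_infty) (Rbar_locally p_infty)) (locally L')).
  { eapply filterlim_ext; [|exact H2]. intros; apply I_swap; auto. }
  apply (filterlim_swap (Idbl f a b)) in H3.
  apply (filterlim_locally_unique _ _ _ H1 H3).
Qed.

Lemma inner_cont f (Hf : forall x y, continuity_2d_pt f x y) a b
  (Ha : forall x, continuous a x) (Hb : forall x, continuous b x) n y0 :
  continuous (fun y => RInt (fun x => f x y * a x * b y) (- n) n) y0.
Proof.
  apply (param_cont (fun x y => f x y * a x * b y)). intros.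
  apply continuity_2d_pt_mult. apply continuity_2d_pt_mult. auto.
  apply c2_of_1; auto. apply c2_of_1'; auto.
Qed.

Lemma I_comb f (Hf : forall x y, continuity_2d_pt f x y) a1 b1 a2 b2
  (Ha1 : forall x, continuous a1 x) (Hb1 : forall x, continuous b1 x)
  (Ha2 : forall x, continuous a2 x) (Hb2 : forall x, continuous b2 x) (s : R) m n :
  RInt (fun y => RInt (fun x => f x y * a1 x * b1 y + s * (f x y * a2 x * b2 y)) (- n) n) (- m) m =
  Idbl f a1 b1 m n + s * Idbl f a2 b2 m n.
Proof.
  unfold Idbl. rewrite <- RInt_scal_R. rewrite <- RInt_plus_R.
  - apply RInt_ext_R. intros y _. rewrite RInt_plus_R, RInt_scal_R; auto.
    apply ex_RInt_cont; intros; apply cont_mult; [apply cont_mult|]; auto. apply c2_1; auto. apply cont_const.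
    apply ex_RInt_cont; intros; apply cont_mult; [apply cont_mult|]; auto. apply c2_1; auto. apply cont_const.
    apply ex_RInt_cont; intros; apply cont_mult. apply cont_const. apply cont_mult; [apply cont_mult|]; auto. apply c2_1; auto. apply cont_const.
  - apply ex_RInt_cont; intros; apply inner_cont; auto.
  - apply ex_RInt_cont; intros; apply cont_mult. apply cont_const. apply inner_cont; auto.
  - apply ex_RInt_cont; intros; apply inner_cont; auto.
Qed.

Theorem lemma12 (f : R -> R -> R) (Hs : smooth2 f) (Hn : normal f)
  (k1 k2 : R) (Hk1 : k1 <> 0) (Hk2 : k2 <> 0)
  (F1 : R -> C)
  (HF1 : forall y, filterlim (fun r => RInt_C (fun x => (RtoC (f x y) * cexpi (- (k1 * x)))%C) (- r) r)
                     (Rbar_locally p_infty) (locally (F1 y)))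
  (G2 : R -> C)
  (HG2 : forall x, filterlim (fun r => RInt_C (fun y => (RtoC (f x y) * cexpi (- (k2 * y)))%C) (- r) r)
                     (Rbar_locally p_infty) (locally (G2 x))) :
  exists L : C,
    is_RInt_gen_C (fun y => (F1 y * cexpi (- (k2 * y)))%C) L /\
    is_RInt_gen_C (fun x => (G2 x * cexpi (- (k1 * x)))%C) L /\
    filterlim (fun mn : R * R =>
                 RInt_C (fun y =>
                   RInt_C (fun x => (RtoC (f x y) * cexpi (- (k1 * x)) * cexpi (- (k2 * y)))%C)
                          (- snd mn) (snd mn))
                 (- fst mn) (fst mn))
              (filter_prod (Rbar_locally p_infty) (Rbar_locally p_infty)) (locally L).
Proof.
  destruct Hn as [_ [_ [[C1 [HC1 HB1]] [[C2 [HC2 HB2]] [[C3 [HC3 HB3]] [N [HZx HZy]]]]]]].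
  destruct (Hs 2%nat) as [D1 [[_ [K0f [K0dx K0dy]]] [[Ddx [_ [K0dxdx _]]] [Ddy [_ [_ K0dydy]]]]]].
  pose proof (c2_of_cont _ K0f) as Cf.
  pose proof (c2_of_cont _ K0dx) as Cdx.
  pose proof (c2_of_cont _ K0dy) as Cdy.
  pose proof (c2_of_cont _ K0dxdx) as Cdxdx.
  pose proof (c2_of_cont _ K0dydy) as Cdydy.
  set (Cc := C1 + C2 + C3).
  assert (HC : 0 < Cc) by (unfold Cc; lra).
  assert (Hle : forall D u, 0 < u -> D <= Cc -> D / u <= Cc / u).
  { intros D u Hu HD. unfold Rdiv. apply Rmult_le_compat_r; auto. left; apply Rinv_0_lt_compat; auto. }
  assert (good1 : good f (dx f) (dx (dx f)) (dy f) N Cc).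
  { unfold good. split; [|split; [|split; [|split; [|split; [|split; [|split; [|split; [|split; [|split; [|split]]]]]]]]]].
    - exact Cf.
    - intros x y. apply (Derive_correct (fun t => f t y)). exact (proj1 (D1 x y)).
    - intros x y. apply c2_1. apply Cdx.
    - intros x y. apply (Derive_correct (fun t => dx f t y)). exact (proj1 (Ddx x y)).
    - intros x y. apply c2_1. apply Cdxdx.
    - intros x y. apply (Derive_correct (fun t => f x t)). exact (proj2 (D1 x y)).
    - intros x y. apply c2_2. apply Cdy.
    - intros y. exact (proj2 (proj2 (HZy y))).
    - intros x. exact (proj1 (proj2 (HZx x))).
    - exact HC.
    - intros x y H. eapply Rle_trans. apply HB1; auto. apply Hle. lra. unfold Cc; lra.
    - intros x y H. eapply Rle_trans. apply HB2; auto. apply Hle. nra. unfold Cc; lra. }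
  assert (good2 : good (fun x y => f y x) (fun x y => dy f y x) (fun x y => dy (dy f) y x) (fun x y => dx f y x) N Cc).
  { unfold good. split; [|split; [|split; [|split; [|split; [|split; [|split; [|split; [|split; [|split; [|split]]]]]]]]]].
    - intros x y. apply (c2_swap f y x). apply Cf.
    - intros x y. apply (Derive_correct (fun t => f y t)). exact (proj2 (D1 y x)).
    - intros x y. apply c2_2. apply Cdy.
    - intros x y. apply (Derive_correct (fun t => dy f y t)). exact (proj2 (Ddy y x)).
    - intros x y. apply c2_2. apply Cdydy.
    - intros x y. apply (Derive_correct (fun t => f t x)). exact (proj1 (D1 y x)).
    - intros x y. apply c2_1. apply Cdx.
    - intros y. exact (proj2 (proj2 (HZx y))).
    - intros x. exact (proj1 (proj2 (HZy x))).
    - exact HC.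
    - intros x y H. rewrite norm2_swap in *. eapply Rle_trans. apply HB1; auto. apply Hle. lra. unfold Cc; lra.
    - intros x y H. rewrite norm2_swap in *. eapply Rle_trans. apply HB3; auto. apply Hle. nra. unfold Cc; lra. }
  assert (HPc : forall y, filterlim (fun r => RInt (fun x => f x y * ph k1 true x) (- r) r)
                  (Rbar_locally p_infty) (locally (fst (F1 y)))).
  { intros y. apply (lim_ext _ (fun r => fst (RInt_C (fun x => (RtoC (f x y) * cexpi (- (k1 * x)))%C) (- r) r))); [|apply (limC_fst _ _ (F1 y)); apply HF1].
    intros r. simpl. apply RInt_ext_R. intros x _. unfold cph. ring. }
  assert (HPs : forall y, filterlim (fun r => RInt (fun x => f x y * ph k1 false x) (- r) r)
                  (Rbar_locally p_infty) (locally (snd (F1 y)))).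
  { intros y. apply (lim_ext _ (fun r => snd (RInt_C (fun x => (RtoC (f x y) * cexpi (- (k1 * x)))%C) (- r) r))); [|apply (limC_snd _ _ (F1 y)); apply HF1].
    intros r. simpl. apply RInt_ext_R. intros x _. unfold sph. ring. }
  assert (HQc : forall y, filterlim (fun r => RInt (fun x => (fun x y => f y x) x y * ph k2 true x) (- r) r)
                  (Rbar_locally p_infty) (locally (fst (G2 y)))).
  { intros y. apply (lim_ext _ (fun r => fst (RInt_C (fun x => (RtoC (f y x) * cexpi (- (k2 * x)))%C) (- r) r))); [|apply (limC_fst _ _ (G2 y)); apply HG2].
    intros r. simpl. apply RInt_ext_R. intros x _. unfold cph. ring. }
  assert (HQs : forall y, filterlim (fun r => RInt (fun x => (fun x y => f y x) x y * ph k2 false x) (- r) r)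
                  (Rbar_locally p_infty) (locally (snd (G2 y)))).
  { intros y. apply (lim_ext _ (fun r => snd (RInt_C (fun x => (RtoC (f y x) * cexpi (- (k2 * x)))%C) (- r) r))); [|apply (limC_snd _ _ (G2 y)); apply HG2].
    intros r. simpl. apply RInt_ext_R. intros x _. unfold sph. ring. }
  destruct (core_ph _ _ _ _ _ _ k1 k2 true true _ Hk1 Hk2 good1 HPc) as [Lcc [Icc Jcc]].
  destruct (core_ph _ _ _ _ _ _ k1 k2 true false _ Hk1 Hk2 good1 HPc) as [Lcs [Ics Jcs]].
  destruct (core_ph _ _ _ _ _ _ k1 k2 false true _ Hk1 Hk2 good1 HPs) as [Lsc [Isc Jsc]].
  destruct (core_ph _ _ _ _ _ _ k1 k2 false false _ Hk1 Hk2 good1 HPs) as [Lss [Iss Jss]].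
  destruct (core_ph _ _ _ _ _ _ k2 k1 true true _ Hk2 Hk1 good2 HQc) as [Mcc [Idbl'cc J'cc]].
  destruct (core_ph _ _ _ _ _ _ k2 k1 true false _ Hk2 Hk1 good2 HQc) as [Mcs [Idbl'cs J'cs]].
  destruct (core_ph _ _ _ _ _ _ k2 k1 false true _ Hk2 Hk1 good2 HQs) as [Msc [Idbl'sc J'sc]].
  destruct (core_ph _ _ _ _ _ _ k2 k1 false false _ Hk2 Hk1 good2 HQs) as [Mss [Idbl'ss J'ss]].
  assert (Ecc : Lcc = Mcc) by (apply (uniq_swap f Cf (ph k1 true) (ph k2 true)); auto; intros; apply ph_c).
  assert (Ecs : Lcs = Msc) by (apply (uniq_swap f Cf (ph k1 true) (ph k2 false)); auto; intros; apply ph_c).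
  assert (Esc : Lsc = Mcs) by (apply (uniq_swap f Cf (ph k1 false) (ph k2 true)); auto; intros; apply ph_c).
  assert (Ess : Lss = Mss) by (apply (uniq_swap f Cf (ph k1 false) (ph k2 false)); auto; intros; apply ph_c).
  subst Mcc Msc Mcs Mss.
  exists ((Lcc - Lss, Lcs + Lsc) : C).
  split; [|split].
  - split.
    + pose proof (is_RInt_gen_minus _ _ _ _ Icc Iss) as H.
      eapply is_RInt_gen_ext; [|exact H]. apply filter_forall. intros ab x _.
      unfold ph, cph, sph. simpl. destruct (F1 x). simpl. unfold minus, plus, opp. simpl. ring.
    + pose proof (is_RInt_gen_plus _ _ _ _ Ics Isc) as H.
      eapply is_RInt_gen_ext; [|exact H]. apply filter_forall. intros ab x _.
      unfold ph, cph, sph. simpl. destruct (F1 x). simpl. unfold plus. simpl. ring.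
  - split.
    + pose proof (is_RInt_gen_minus _ _ _ _ Idbl'cc Idbl'ss) as H.
      eapply is_RInt_gen_ext; [|exact H]. apply filter_forall. intros ab x _.
      unfold ph, cph, sph. simpl. destruct (G2 x). simpl. unfold minus, plus, opp. simpl. ring.
    + pose proof (is_RInt_gen_plus _ _ _ _ Idbl'sc Idbl'cs) as H.
      eapply is_RInt_gen_ext; [|exact H]. apply filter_forall. intros ab x _.
      unfold ph, cph, sph. simpl. destruct (G2 x). simpl. unfold plus. simpl. ring.
  - assert (FFp : Filter (filter_prod (Rbar_locally p_infty) (Rbar_locally p_infty))).
    { apply filter_prod_filter; apply Rbar_locally_filter. }
    apply (@limC_pair _ _ FFp).
    + apply (@lim_ext _ _ FFp (fun mn : R * R => Idbl f (ph k1 true) (ph k2 true) (fst mn) (snd mn) - Idbl f (ph k1 false) (ph k2 false) (fst mn) (snd mn))); [|exact (@lim_minus _ _ FFp _ _ _ _ Jcc Jss)].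
      intros [m n]. cbn [fst snd].
      transitivity (Idbl f (ph k1 true) (ph k2 true) m n + (-1) * Idbl f (ph k1 false) (ph k2 false) m n). ring.
      rewrite <- (I_comb f Cf _ _ _ _ (ph_c k1 true) (ph_c k2 true) (ph_c k1 false) (ph_c k2 false) (-1) m n).
      unfold RInt_C, Re, Im. cbn [fst snd].
      apply RInt_ext_R. intros y _. apply RInt_ext_R. intros x _. unfold ph, cph, sph. simpl. ring.
    + apply (@lim_ext _ _ FFp (fun mn : R * R => Idbl f (ph k1 true) (ph k2 false) (fst mn) (snd mn) + Idbl f (ph k1 false) (ph k2 true) (fst mn) (snd mn))); [|exact (@lim_plus _ _ FFp _ _ _ _ Jcs Jsc)].
      intros [m n]. cbn [fst snd].
      transitivity (Idbl f (ph k1 true) (ph k2 false) m n + 1 * Idbl f (ph k1 false) (ph k2 true) m n). ring.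
      rewrite <- (I_comb f Cf _ _ _ _ (ph_c k1 true) (ph_c k2 false) (ph_c k1 false) (ph_c k2 true) 1 m n).
      unfold RInt_C, Re, Im. cbn [fst snd].
      apply RInt_ext_R. intros y _. apply RInt_ext_R. intros x _. unfold ph, cph, sph. simpl. ring.
Qed.
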